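(* Consider the following algorithm (SeqPolyPA) for polynomial preferential attachment with exponent $\alpha>0$ and one host per new node. It maintains a list $P$ (the proposal list) of nodes, in which a node may occur several times; for a node $v$ let $c(v)$ be the number of occurrences of $v$ in $P$ and $w(v)=\deg(v)^\alpha/c(v)$. Initially $P$ contains each seed node $v$ exactly $\lceil \deg_0(v)^\alpha n_0/W_0\rceil$ times. To attach the $i$-th new node $v_{n_0+i}$ to the current graph $G_{i-1}$, the algorithm repeatedly selects a candidate $h$ uniformly at random among the positions of $P$ and accepts it with probability $w(h)/\max_{v\in V_{i-1}} w(v)$ (all quantities taken with respect to $G_{i-1}$ and the current $P$), until a candidate is accepted. Then it adds $v_{n_0+i}$ and the edge $\{v_{n_0+i},h\}$ to the graph, appends $v_{n_0+i}$ once to $P$, and afterwards appends $h$ to $P$ repeatedly as long as $w(h)>W_i/n_i$ (with respect to $G_i$). Then, in every step, SeqPolyPA selects each node $h$ of the current graph $G$ as host with probability $\deg(h)^\alpha/W$, where $W=\sum_{v\in V(G)}\deg(v)^\alpha$.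
   Context: Preferential attachment model: start from a seed graph $G_0=(V_0,E_0)$ with $n_0$ nodes and $m_0$ edges; iteratively add $N$ new nodes $v_{n_0+1},\dots,v_{n_0+N}$, each connected to earlier nodes (''hosts''); here each new node receives one host. $G_i=(V_i,E_i)$ denotes the graph after $i$ new nodes were added, $n_i=n_0+i$, $\deg_i(v)$ is the degree of $v$ in $G_i$, and $W_i=\sum_{v\in V_i}\deg_i(v)^\alpha$ (assumed positive). In polynomial preferential attachment the host $h$ is chosen with probability proportional to $\deg(h)^\alpha$. *)

(* Defs.v *)
From Stdlib Require Import Reals List Arith.
From Coquelicot Require Import Coquelicot.
Import ListNotations.
Open Scope R_scope.

(* Nodes are natural numbers; a graph with n nodes has node set {0,..,n-1}.
   Edges are unordered pairs stored as ordered pairs; multi-edges allowed. *)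
Record state := mkState {
  st_n : nat;
  st_E : list (nat * nat);
  st_P : list nat
}.

Definition deg (E : list (nat * nat)) (v : nat) : nat :=
  fold_right (fun e acc =>
    (acc + (if Nat.eqb (fst e) v then 1 else 0)
         + (if Nat.eqb (snd e) v then 1 else 0))%nat) 0%nat E.

Definition dpow (alpha : R) (d : nat) : R :=
  if Nat.eqb d 0 then 0 else Rpower (INR d) alpha.

Definition sumR (l : list R) : R := fold_right Rplus 0 l.

Definition Wt (alpha : R) (s : state) : R :=
  sumR (map (fun v => dpow alpha (deg (st_E s) v)) (seq 0 (st_n s))).

Definition cnt (P : list nat) (v : nat) : nat := count_occ Nat.eq_dec P v.

Definition wgt (alpha : R) (s : state) (v : nat) : R :=
  dpow alpha (deg (st_E s) v) / INR (cnt (st_P s) v).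

Definition wmax (alpha : R) (s : state) : R :=
  fold_right Rmax 0 (map (wgt alpha s) (seq 0 (st_n s))).

(* One trial of the rejection sampler: a uniformly random position of P is
   drawn and its node h is accepted with probability w(h)/wmax.
   Probability that a single trial draws and accepts h: *)
Definition accept_prob (alpha : R) (s : state) (h : nat) : R :=
  INR (cnt (st_P s) h) / INR (length (st_P s)) * (wgt alpha s h / wmax alpha s).

Definition reject_prob (alpha : R) (s : state) : R :=
  1 - sumR (map (fun x => wgt alpha s x / wmax alpha s) (st_P s))
        / INR (length (st_P s)).

(* Initial proposal list: each seed node v appears exactly
   ceil(deg_0(v)^alpha * n0 / W0) times (order in P is irrelevant). *)
Definition init_P_ok (alpha : R) (s : state) : Prop :=
  (forall x, In x (st_P s) -> (x < st_n s)%nat) /\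
  forall v, (v < st_n s)%nat ->
    let x := dpow alpha (deg (st_E s) v) * INR (st_n s) / Wt alpha s in
    INR (cnt (st_P s) v) - 1 < x /\ x <= INR (cnt (st_P s) v).

(* One step of SeqPolyPA, given the host h returned by the sampler:
   add node n and edge {n,h}, append n once to P, then append h exactly k
   times where k is the number of iterations of the loop
   "while w(h) > W_i/n_i, append h to P" (w, W, n w.r.t. the new graph). *)
Definition step (alpha : R) (s : state) (h : nat) (k : nat) (s' : state) : Prop :=
  let E' := (st_n s, h) :: st_E s in
  let n' := S (st_n s) in
  let c := cnt (st_P s ++ [st_n s]) h in
  let g := mkState n' E' (st_P s) in
  let d := dpow alpha (deg E' h) in
  (forall j, (j < k)%nat -> d / INR (c + j) > Wt alpha g / INR n') /\
  d / INR (c + k) <= Wt alpha g / INR n' /\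
  s' = mkState n' E' (st_P s ++ [st_n s] ++ repeat h k).

(* States reachable after i insertions, along histories of positive
   probability (each host has positive probability of being accepted
   in a single trial). *)
Inductive reachable (alpha : R) (n0 : nat) (E0 : list (nat * nat))
  : nat -> state -> Prop :=
| reach0 : forall P0, init_P_ok alpha (mkState n0 E0 P0) ->
    reachable alpha n0 E0 0 (mkState n0 E0 P0)
| reachS : forall i s h k s', reachable alpha n0 E0 i s ->
    (h < st_n s)%nat -> 0 < accept_prob alpha s h ->
    step alpha s h k s' -> reachable alpha n0 E0 (S i) s'.

(* Main.v *)
Require Import Defs.
From Stdlib Require Import Reals List Arith.
From Coquelicot Require Import Coquelicot.
From Stdlib Require Import Lra Lia.
Open Scope R_scope.

Lemma sumR_app l1 l2 : sumR (l1 ++ l2) = sumR l1 + sumR l2.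
Proof. induction l1; simpl; [ring| rewrite IHl1; ring]. Qed.

Lemma sumR_plus {A} (g k : A -> R) l :
  sumR (map (fun v => g v + k v) l) = sumR (map g l) + sumR (map k l).
Proof. induction l; simpl; [ring| rewrite IHl; ring]. Qed.

Lemma sumR_zero {A} (g : A -> R) l :
  sumR (map (fun v => 0 * g v) l) = 0.
Proof. induction l; simpl; [ring| rewrite IHl; ring]. Qed.

Lemma sumR_div {A} (g : A -> R) M l :
  sumR (map (fun v => g v / M) l) = sumR (map g l) / M.
Proof. induction l; simpl; unfold Rdiv in *; [ring| rewrite IHl; ring]. Qed.

Lemma sumR_nonneg l : (forall x, In x l -> 0 <= x) -> 0 <= sumR l.
Proof.
  induction l; simpl; intros H; [lra|].
  assert (0 <= a) by auto. assert (0 <= sumR l) by auto. lra.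
Qed.

Lemma sumR_le {A} (g : A -> R) M l : (forall x, In x l -> g x <= M) ->
  sumR (map g l) <= INR (length l) * M.
Proof.
  induction l; intros H; [simpl; lra|].
  change (length (a :: l)) with (S (length l)). rewrite S_INR. simpl.
  assert (g a <= M) by (apply H; simpl; auto).
  assert (sumR (map g l) <= INR (length l) * M) by (apply IHl; intros; apply H; simpl; auto).
  lra.
Qed.

Lemma dpow_nonneg alpha d : 0 <= dpow alpha d.
Proof.
  unfold dpow. destruct (Nat.eqb_spec d 0); [lra|].
  unfold Rpower. left. apply exp_pos.
Qed.

Lemma dpow_pos alpha d : d <> 0%nat -> 0 < dpow alpha d.
Proof.
  unfold dpow. destruct (Nat.eqb_spec d 0); [lia|].
  intros _. unfold Rpower. apply exp_pos.
Qed.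

Lemma dpow_zero alpha : dpow alpha 0 = 0.
Proof. reflexivity. Qed.

Lemma indicator (f : nat -> R) a n :
  sumR (map (fun v => if Nat.eqb a v then f v else 0) (seq 0 n)) =
  if Nat.ltb a n then f a else 0.
Proof.
  induction n.
  - simpl. destruct (Nat.ltb_spec a 0); [lia|reflexivity].
  - rewrite seq_S, map_app, sumR_app, IHn. simpl.
    destruct (Nat.ltb_spec a n); destruct (Nat.eqb_spec a n);
    destruct (Nat.ltb_spec a (S n)); subst; try lia; ring.
Qed.

Lemma double_count (f : nat -> R) n P : (forall x, In x P -> (x < n)%nat) ->
  sumR (map f P) = sumR (map (fun v => INR (cnt P v) * f v) (seq 0 n)).
Proof.
  induction P as [|a P IH]; intros H.
  - simpl. rewrite sumR_zero. reflexivity.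
  - simpl sumR at 1.
    rewrite (map_ext (fun v => INR (cnt (a :: P) v) * f v)
       (fun v => (if Nat.eqb a v then f v else 0) + INR (cnt P v) * f v)).
    + rewrite sumR_plus, indicator, <- IH by (intros; apply H; simpl; auto).
      destruct (Nat.ltb_spec a n); [ring|].
      assert (a < n)%nat by (apply H; simpl; auto). lia.
    + intros v. unfold cnt. simpl. destruct (Nat.eq_dec a v); destruct (Nat.eqb_spec a v);
      try congruence; try rewrite S_INR; ring.
Qed.

Lemma fold_max_ge l x : In x l -> x <= fold_right Rmax 0 l.
Proof.
  induction l; simpl; [tauto|]. intros [->|Hi].
  - apply Rmax_l.
  - eapply Rle_trans; [apply IHl; auto| apply Rmax_r].
Qed.

Definition Inv (alpha : R) (s : state) : Prop :=
  (forall x, In x (st_P s) -> (x < st_n s)%nat) /\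
  (forall v, (v < st_n s)%nat -> deg (st_E s) v <> 0%nat -> cnt (st_P s) v <> 0%nat) /\
  0 < Wt alpha s.

Lemma deg_cons n h E v :
  deg ((n, h) :: E) v = (deg E v + (if Nat.eqb n v then 1 else 0) + (if Nat.eqb h v then 1 else 0))%nat.
Proof. reflexivity. Qed.

Lemma cnt_app P Q v : cnt (P ++ Q) v = (cnt P v + cnt Q v)%nat.
Proof. unfold cnt. apply count_occ_app. Qed.

Lemma reach_inv alpha n0 E0 i s :
  0 < Wt alpha (mkState n0 E0 nil) -> reachable alpha n0 E0 i s -> Inv alpha s.
Proof.
  intros HW H. induction H as [P0 Hok | i s h k s' Hr IH Hh Hacc Hstep].
  - destruct Hok as [H1 H2]. split; [exact H1|]. split; [|exact HW].
    simpl in *. intros v Hv Hd Hc.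
    destruct (H2 v Hv) as [_ Hle]. rewrite Hc in Hle. simpl in Hle.
    assert (0 < dpow alpha (deg E0 v)) by (apply dpow_pos; auto).
    assert (0 < INR n0) by (apply lt_0_INR; lia).
    change (Wt alpha {| st_n := n0; st_E := E0; st_P := P0 |}) with
      (Wt alpha {| st_n := n0; st_E := E0; st_P := nil |}) in Hle.
    assert (0 < dpow alpha (deg E0 v) * INR n0 / Wt alpha {| st_n := n0; st_E := E0; st_P := nil |}).
    { unfold Rdiv. apply Rmult_lt_0_compat; [nra|]. apply Rinv_0_lt_compat; auto. }
    lra.
  - destruct IH as [I1 [I2 I3]]. destruct Hstep as [_ [_ ->]].
    destruct s as [n E P]; simpl in *.
    assert (Hch : cnt P h <> 0%nat).
    { intros Hc. unfold accept_prob in Hacc. simpl in Hacc. rewrite Hc in Hacc.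
      simpl in Hacc. unfold Rdiv in Hacc. rewrite !Rmult_0_l in Hacc. lra. }
    split; [|split].
    + intros x Hx. apply in_app_iff in Hx. destruct Hx as [Hx|[Hx|Hx]].
      * specialize (I1 x Hx). cbn [st_n st_E st_P]. lia.
      * cbn [st_n st_E st_P]; lia.
      * apply repeat_spec in Hx. cbn [st_n st_E st_P]; lia.
    + cbn [st_n st_E st_P]. intros v Hv Hd. rewrite !cnt_app. rewrite deg_cons in Hd.
      destruct (Nat.eqb_spec n v).
      * subst. unfold cnt. simpl. destruct (Nat.eq_dec v v); [lia|congruence].
      * destruct (Nat.eqb_spec (deg E v) 0).
        -- destruct (Nat.eqb_spec h v); [subst; lia| lia].
        -- assert (cnt P v <> 0%nat) by (apply I2; lia). lia.
    + unfold Wt. cbn [st_n st_E st_P]. rewrite seq_S, map_app, sumR_app, Nat.add_0_l.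
      match goal with |- 0 < _ + sumR (map ?g (n :: nil)) =>
        replace (sumR (map g (n :: nil))) with (g n) by (simpl; ring) end.
      cbv beta.
      assert (0 <= sumR (map (fun v => dpow alpha (deg ((n, h) :: E) v)) (seq 0 n))).
      { apply sumR_nonneg. intros x Hx. apply in_map_iff in Hx.
        destruct Hx as [y [<- _]]. apply dpow_nonneg. }
      assert (0 < dpow alpha (deg ((n, h) :: E) n)).
      { apply dpow_pos. rewrite deg_cons, Nat.eqb_refl. lia. }
      lra.
Qed.

Theorem theorem1 (alpha : R) (n0 : nat) (E0 : list (nat * nat)) :
  0 < alpha ->
  (forall e, In e E0 -> (fst e < n0)%nat /\ (snd e < n0)%nat) ->
  0 < Wt alpha (mkState n0 E0 nil) ->
  forall (i : nat) (s : state), reachable alpha n0 E0 i s ->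
  forall h : nat, (h < st_n s)%nat ->
    is_series (fun k => reject_prob alpha s ^ k * accept_prob alpha s h)
              (dpow alpha (deg (st_E s) h) / Wt alpha s).
Proof.
  intros Ha _ HW i s Hr h Hh.
  destruct (reach_inv alpha n0 E0 i s HW Hr) as [I1 [I2 I3]].
  set (M := wmax alpha s).
  set (m := INR (length (st_P s))).
  set (W := Wt alpha s) in *.
  set (d := dpow alpha (deg (st_E s) h)).
  assert (HS : sumR (map (wgt alpha s) (st_P s)) = W).
  { rewrite (double_count _ (st_n s)) by exact I1. unfold W, Wt.
    f_equal. apply map_ext_in. intros v Hv. apply in_seq in Hv.
    unfold wgt. destruct (Nat.eqb_spec (cnt (st_P s) v) 0) as [Hc|Hc].
    - rewrite Hc. destruct (Nat.eqb_spec (deg (st_E s) v) 0) as [Hd|Hd].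
      + rewrite Hd, dpow_zero. simpl. ring.
      + exfalso. apply (I2 v); auto; lia.
    - field. apply not_0_INR. exact Hc. }
  assert (Hle : W <= m * M).
  { rewrite <- HS. apply sumR_le. intros x Hx. unfold M, wmax.
    apply fold_max_ge. apply in_map. apply in_seq. specialize (I1 x Hx). lia. }
  assert (Hm0 : 0 <= m) by apply pos_INR.
  assert (Hm : 0 < m).
  { destruct Hm0 as [Hm0|Hm0]; auto. rewrite <- Hm0 in Hle. lra. }
  assert (HM : 0 < M).
  { destruct (Rlt_or_le 0 M); auto. nra. }
  assert (Hacc : accept_prob alpha s h = d / (m * M)).
  { unfold accept_prob. fold m M. unfold wgt. fold d.
    destruct (Nat.eqb_spec (cnt (st_P s) h) 0) as [Hc|Hc].
    - rewrite Hc. destruct (Nat.eqb_spec (deg (st_E s) h) 0) as [Hd|Hd].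
      + unfold d. rewrite Hd, dpow_zero. simpl. unfold Rdiv. ring.
      + exfalso. apply (I2 h); auto.
    - field. split; [|split]; try lra. apply not_0_INR. exact Hc. }
  assert (Hrej : reject_prob alpha s = 1 - W / (m * M)).
  { unfold reject_prob. fold m M. rewrite sumR_div, HS. field. lra. }
  rewrite Hacc, Hrej.
  set (q := W / (m * M)).
  assert (Hq0 : 0 < q) by (unfold q; apply Rdiv_lt_0_compat; nra).
  assert (Hq1 : q <= 1) by (unfold q; assert (0 < m * M) by nra;
    apply (Rmult_le_reg_r (m * M)); auto; unfold Rdiv; rewrite Rmult_assoc, Rinv_l by lra; lra).
  assert (Habs : Rabs (1 - q) < 1) by (rewrite Rabs_pos_eq; lra).
  pose proof (is_series_scal (d / (m * M)) _ _ (is_series_geom _ Habs)) as Hs.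
  replace (d / W) with (scal (d / (m * M)) (/ (1 - (1 - q)))).
  - eapply is_series_ext; [|exact Hs]. intros k. simpl. unfold scal; simpl.
    unfold mult; simpl. ring.
  - unfold scal; simpl. unfold mult; simpl. unfold q. field. split; lra.
Qed.
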